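(* Let $\Sigma=\{b\}$. There exists a 2R1CA over $\Sigma$ which accepts every input $b^{2^n}$ ($n\ge0$) with probability $1$ and rejects every other input $x\in\Sigma^*$ with probability $1$.
   Context: Let $\Gamma=\Sigma\cup\{\cent,\$\}$ with end-markers $\cent,\$\notin\Sigma$, $S=\{0,1\}$, $\mathrm{sign}(k)=0$ if $k=0$ and $1$ otherwise, and $\mu(\leftarrow)=-1,\mu(\downarrow)=0,\mu(\rightarrow)=+1$. 2Q1CA: $M=(Q,\Sigma,\delta,q_0,Q_{\rm acc},Q_{\rm rej})$ with finite $Q$, $q_0\in Q$, disjoint $Q_{\rm acc},Q_{\rm rej}\subset Q$, and $\delta:Q\times\Gamma\times S\times Q\times\{-1,0,+1\}\times\{\leftarrow,\downarrow,\rightarrow\}\to\mathbb{C}$ satisfying the well-formedness conditions below. For $\alpha,\beta\in\{-2,\dots,2\}$ let $W_{\alpha,\beta}(q_1,\sigma_1,s_1;q_2,\sigma_2,s_2)=\sum_{q'\in Q}\sum\overline{\delta(q_1,\sigma_1,s_1,q',c_1,d_1)}\,\delta(q_2,\sigma_2,s_2,q',c_2,d_2)$, inner sum over $(c_1,d_1),(c_2,d_2)$ with $c_2-c_1=\alpha$, $\mu(d_2)-\mu(d_1)=\beta$. Well-formedness: for all $q_1,q_2\in Q$, $\sigma,\sigma_1,\sigma_2\in\Gamma$, $s,s_1,s_2\in S$: (i) $W_{0,0}(q_1,\sigma,s;q_2,\sigma,s)=[q_1=q_2]$; (ii) $W_{0,\beta}(q_1,\sigma_1,s;q_2,\sigma_2,s)=0$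 for $\beta\in\{1,2\}$; (iii) $W_{\alpha,0}(q_1,\sigma,s_1;q_2,\sigma,s_2)=0$ for $\alpha\in\{1,2\}$; (iv) $W_{\alpha,\beta}(q_1,\sigma_1,s_1;q_2,\sigma_2,s_2)=0$ for $\alpha\in\{1,2\}$, $\beta\in\{-2,-1,1,2\}$. On input $x$ of length $n$ the circular tape holds $w_x=\cent x\$$ at positions $0,\dots,n+1$ (modulo $n+2$); configurations are $(q,a,b)\in Q\times\mathbb{Z}\times\{0,\dots,n+1\}$ and $U_x|q,a,b\rangle=\sum_{q',c,d}\delta(q,w_x(b),\mathrm{sign}(a),q',c,d)|q',a+c,b+\mu(d)\rangle$. Computation starts in $|q_0,0,0\rangle$; at each step $U_x$ is applied and then the state is measured w.r.t. the orthogonal decomposition into the spans of configurations whose state lies in $Q_{\rm acc}$, in $Q_{\rm rej}$, and in neither; outcomes ''accept''/''reject'' halt, otherwise the computation continues from the collapsed (renormalized) state. Acceptance (rejection) probability is the total probability of ever obtaining the outcome ''accept'' (''reject''). A 2R1CA is a 2Q1CA all of whose transition amplitudes lie in $\{0,1\}$. *)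

(* Defs.v *)
From HB Require Import structures.
From mathcomp Require Import all_boot all_order all_algebra.
From mathcomp Require Import complex.
From mathcomp Require Import all_classical all_reals all_analysis.
Set Implicit Arguments. Unset Strict Implicit. Unset Printing Implicit Defensive.
Import Order.TTheory GRing.Theory Num.Theory.
Local Open Scope ring_scope.

Inductive tapesym (Sigma : Type) := Cent | Dollar | Sym of Sigma.
Arguments Cent {Sigma}. Arguments Dollar {Sigma}.

Inductive cmove := CM | C0 | CP.
Definition cval (c : cmove) : int := match c with CM => -1 | C0 => 0 | CP => 1 end.
Definition cmoves : seq cmove := [:: CM; C0; CP].

Inductive hmove := HL | HN | HR.
Definition mu (d : hmove) : int := match d with HL => -1 | HN => 0 | HR => 1 end.
Definition hmoves : seq hmove := [:: HL; HN; HR].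

(* sign : Z -> S = {0,1}, encoded as bool (false = 0, true = 1) *)
Definition sgn (a : int) : bool := a != 0.

Record Q1CA (Sigma : Type) (R : realType) := MkQ1CA {
  st : finType;
  delta : st -> tapesym Sigma -> bool -> st -> cmove -> hmove -> R[i];
  q0 : st;
  Qacc : {set st};
  Qrej : {set st}
}.
Arguments st {Sigma R} _.
Arguments delta {Sigma R} _.
Arguments q0 {Sigma R} _.
Arguments Qacc {Sigma R} _.
Arguments Qrej {Sigma R} _.

Section Semantics.
Variables (Sigma : Type) (R : realType) (M : Q1CA Sigma R).

Definition W (al be : int) (q1 : st M) (s1 : tapesym Sigma) (b1 : bool)
    (q2 : st M) (s2 : tapesym Sigma) (b2 : bool) : R[i] :=
  \sum_(q' : st M) \sum_(c1 <- cmoves) \sum_(d1 <- hmoves)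
    \sum_(c2 <- cmoves) \sum_(d2 <- hmoves |
        (cval c2 - cval c1 == al) && (mu d2 - mu d1 == be))
      (delta M q1 s1 b1 q' c1 d1)^* * delta M q2 s2 b2 q' c2 d2.

Definition well_formed : Prop :=
  [/\ [disjoint Qacc M & Qrej M],
      (forall q1 q2 s b, W 0 0 q1 s b q2 s b = (q1 == q2)%:R),
      (forall q1 q2 s1 s2 b be, be \in [:: 1; 2] -> W 0 be q1 s1 b q2 s2 b = 0),
      (forall q1 q2 s b1 b2 al, al \in [:: 1; 2] -> W al 0 q1 s b1 q2 s b2 = 0) &
      (forall q1 q2 s1 s2 b1 b2 al be, al \in [:: 1; 2] ->
          be \in [:: -2; -1; 1; 2] -> W al be q1 s1 b1 q2 s2 b2 = 0)].

Definition is_2R1CA : Prop :=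
  forall q s b q' c d, delta M q s b q' c d = 0 \/ delta M q s b q' c d = 1.

Variable x : seq Sigma.
Let n := size x.

Definition wx (b : 'I_n.+2) : tapesym Sigma :=
  if val b == 0%N then Cent
  else match onth x (val b).-1 with Some s => Sym s | None => Dollar end.

(* new head position b + mu(d) modulo n+2 *)
Definition newpos (b : 'I_n.+2) (d : hmove) : nat :=
  match d with
  | HL => (val b + n.+1) %% n.+2
  | HN => val b
  | HR => (val b).+1 %% n.+2
  end.

(* (unnormalized) state vectors over configurations (q, a, b) *)
Definition qstate := st M -> int -> 'I_n.+2 -> R[i].

(* U_x psi, written coordinatewise: the coefficient of |q',a',b'> *)
Definition Ux (psi : qstate) : qstate := fun q' a' b' =>
  \sum_(q : st M) \sum_(c <- cmoves) \sum_(d <- hmoves)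
    \sum_(b : 'I_n.+2 | newpos b d == val b')
      psi q (a' - cval c) b * delta M q (wx b) (sgn (a' - cval c)) q' c d.

Definition psi0 : qstate := fun q a b =>
  ((q == q0 M) && (a == 0) && (val b == 0%N))%:R.

(* unnormalized state after t steps conditioned on not having halted *)
Fixpoint run (t : nat) : qstate :=
  match t with
  | 0 => psi0
  | t.+1 => fun q a b =>
      if (q \in Qacc M) || (q \in Qrej M) then 0 else Ux (run t) q a b
  end.

Definition sqnorm (z : R[i]) : R := (complex.Re z) ^+ 2 + (complex.Im z) ^+ 2.

Definition proj_prob (S : {set st M}) (phi : qstate) : \bar R :=
  (\esum_(a in [set: int]) (\sum_(q in S) \sum_(b : 'I_n.+2) sqnorm (phi q a b))%:E)%E.

(* probability that the outcome at step t+1 is accept / reject *)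
Definition acc_step (t : nat) : \bar R := proj_prob (Qacc M) (Ux (run t)).
Definition rej_step (t : nat) : \bar R := proj_prob (Qrej M) (Ux (run t)).

Definition acc_prob : \bar R := (\sum_(0 <= t <oo) acc_step t)%E.
Definition rej_prob : \bar R := (\sum_(0 <= t <oo) rej_step t)%E.

End Semantics.

(* Main.v *)
Require Import Defs.
From HB Require Import structures.
From mathcomp Require Import all_boot all_order all_algebra.
From mathcomp Require Import complex.
From mathcomp Require Import all_classical all_reals all_analysis.
Import Order.TTheory GRing.Theory Num.Theory.
Local Open Scope ring_scope.

Definition cmeq (c c' : cmove) : bool :=
  match c, c' with CM, CM | C0, C0 | CP, CP => true | _, _ => false end.
Definition hmeq (c c' : hmove) : bool :=
  match c, c' with HL, HL | HN, HN | HR, HR => true | _, _ => false end.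
Lemma cmeqxx c : cmeq c c. Proof. by case: c. Qed.
Lemma hmeqxx c : hmeq c c. Proof. by case: c. Qed.

Section W.
Variable R : realType.
Lemma colc (F : cmove -> R[i]) e : (forall c, ~~ cmeq c e -> F c = 0) ->
  \sum_(c <- cmoves) F c = F e.
Proof.
rewrite !big_cons big_nil; case: e => H.
- by rewrite (H C0) // (H CP) // !addr0.
- by rewrite (H CM) // (H CP) // !addr0 add0r.
- by rewrite (H CM) // (H C0) // !add0r addr0.
Qed.
Lemma colh (F : hmove -> R[i]) e : (forall c, ~~ hmeq c e -> F c = 0) ->
  \sum_(c <- hmoves) F c = F e.
Proof.
rewrite !big_cons big_nil; case: e => H.
- by rewrite (H HN) // (H HR) // !addr0.
- by rewrite (H HL) // (H HR) // !addr0 add0r.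
- by rewrite (H HL) // (H HN) // !add0r addr0.
Qed.

Lemma inner_W (e : cmove) (h : hmove) (X1 X2 : bool) (al be : int) :
  \sum_(c1 <- cmoves) \sum_(d1 <- hmoves)
    \sum_(c2 <- cmoves) \sum_(d2 <- hmoves |
        (cval c2 - cval c1 == al) && (mu d2 - mu d1 == be))
      ((X1 && cmeq c1 e && hmeq d1 h)%:R : R[i])^* * (X2 && cmeq c2 e && hmeq d2 h)%:R
  = (X1 && X2 && (al == 0) && (be == 0))%:R.
Proof.
rewrite (colc _ e); last first.
  move=> c1 hc /=. rewrite big1 // => d1 _; rewrite big1 // => c2 _.
  rewrite big1 // => d2 _; by rewrite (negbTE hc) andbF conjC0 mul0r.
rewrite (colh _ h); last first.
  move=> d1 hc /=; rewrite big1 // => c2 _.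
  rewrite big1 // => d2 _; by rewrite (negbTE hc) andbF conjC0 mul0r.
rewrite (colc _ e); last first.
  move=> c2 hc /=; rewrite big1 // => d2 _; by rewrite (negbTE hc) andbF andFb mulr0.
rewrite big_mkcond (colh _ h); last first.
  by move=> d2 hc /=; rewrite (negbTE hc) andbF mulr0 if_same.
rewrite !subrr cmeqxx hmeqxx !andbT conjC_nat -natrM.
by rewrite [0 == al]eq_sym [0 == be]eq_sym; case: X1; case: X2; case: (al == 0); case: (be == 0).
Qed.
End W.

Inductive stt := qS | qT | qG | qH0 | qH1 | qV | qA | qR.
Definition enc (q : stt) : nat :=
  match q with qS => 0 | qT => 1 | qG => 2 | qH0 => 3 | qH1 => 4 | qV => 5 | qA => 6 | qR => 7 end.
Definition dec (n : nat) : option stt :=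
  match n with 0 => Some qS | 1 => Some qT | 2 => Some qG | 3 => Some qH0 | 4 => Some qH1
  | 5 => Some qV | 6 => Some qA | 7 => Some qR | _ => None end.
Lemma encK : pcancel enc dec. Proof. by case. Qed.
HB.instance Definition _ := Countable.copy stt (pcan_type encK).
Lemma stt_enumP : @finite_axiom stt [:: qS; qT; qG; qH0; qH1; qV; qA; qR].
Proof. by case. Qed.
HB.instance Definition _ := @fintype.isFinite.Build stt _ stt_enumP.

Definition ftr (q : stt) (sg : tapesym unit) (s : bool) : stt :=
  match sg, s, q with
  | Cent, false, qS => qT
  | Cent, false, qT => qS
  | Cent, false, qG => qG
  | Cent, false, qH0 => qR
  | Cent, false, qH1 => qH0
  | Cent, false, qV => qH1
  | Cent, false, qA => qV
  | Cent, false, qR => qA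
  | Cent, true, qS => qS
  | Cent, true, qT => qT
  | Cent, true, qG => qG
  | Cent, true, qH0 => qH1
  | Cent, true, qH1 => qH0
  | Cent, true, qV => qV
  | Cent, true, qA => qA
  | Cent, true, qR => qR
  | Sym _, false, qS => qS
  | Sym _, false, qT => qG
  | Sym _, false, qG => qH0
  | Sym _, false, qH0 => qT
  | Sym _, false, qH1 => qV
  | Sym _, false, qV => qR
  | Sym _, false, qA => qH1
  | Sym _, false, qR => qA
  | Sym _, true, qS => qS
  | Sym _, true, qT => qT
  | Sym _, true, qG => qG
  | Sym _, true, qH0 => qH1
  | Sym _, true, qH1 => qH0
  | Sym _, true, qV => qV
  | Sym _, true, qA => qA
  | Sym _, true, qR => qR
  | Dollar, false, qS => qS
  | Dollar, false, qT => qT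
  | Dollar, false, qG => qG
  | Dollar, false, qH0 => qH0
  | Dollar, false, qH1 => qH1
  | Dollar, false, qV => qA
  | Dollar, false, qA => qV
  | Dollar, false, qR => qR
  | Dollar, true, qS => qS
  | Dollar, true, qT => qG
  | Dollar, true, qG => qH1
  | Dollar, true, qH0 => qT
  | Dollar, true, qH1 => qH0
  | Dollar, true, qV => qV
  | Dollar, true, qA => qA
  | Dollar, true, qR => qR
  end.

Definition entc (q : stt) : cmove :=
  match q with qT | qG => CP | qH0 | qH1 => CM | _ => C0 end.
Definition entd (q : stt) : hmove :=
  match q with qT | qV => HR | qH0 => HL | _ => HN end.

Definition dlt (R : realType) (q : stt) (s : tapesym unit) (b : bool) (q' : stt)
  (c : cmove) (d : hmove) : R[i] :=
  ((ftr q s b == q') && cmeq c (entc q') && hmeq d (entd q'))%:R.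

Definition MM (R : realType) : Q1CA unit R := @MkQ1CA unit R stt (@dlt R) qS [set qA] [set qR].

Lemma W_MM (R : realType) al be q1 s1 b1 q2 s2 b2 :
  @W unit R (MM R) al be q1 s1 b1 q2 s2 b2 =
  ((ftr q1 s1 b1 == ftr q2 s2 b2) && (al == 0) && (be == 0))%:R.
Proof.
rewrite /W /=.
under eq_bigr => q' _ do rewrite /dlt inner_W.
rewrite (bigD1 (ftr q1 s1 b1)) //= big1 ?addr0; last first.
  by move=> q' /negbTE hq; rewrite eq_sym hq.
by rewrite eqxx /= [ftr q2 s2 b2 == _]eq_sym.
Qed.

Lemma ftr_inj s b q1 q2 : (ftr q1 s b == ftr q2 s b) = (q1 == q2).
Proof. by case: q1; case: q2; case: s => [||[]]; case: b. Qed.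

Lemma wf_MM (R : realType) : well_formed (MM R).
Proof.
split.
- by rewrite /= disjoints1 inE.
- by move=> q1 q2 s b; rewrite W_MM ftr_inj !eqxx !andbT.
- by move=> q1 q2 s1 s2 b be; rewrite !inE W_MM => /orP[]/eqP->; rewrite andbF.
- by move=> q1 q2 s b1 b2 al; rewrite !inE W_MM => /orP[]/eqP->; rewrite andbF.
- by move=> q1 q2 s1 s2 b1 b2 al be; rewrite !inE W_MM => /orP[]/eqP->; rewrite andbF.
Qed.

Lemma r_MM (R : realType) : is_2R1CA (MM R).
Proof. by move=> q s b q' c d; rewrite /= /dlt; case: (_ && _); [right|left]. Qed.

From HB Require Import structures.
From mathcomp Require Import all_boot all_order all_algebra.
From mathcomp Require Import complex.
From mathcomp Require Import all_classical all_reals all_analysis.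
Import Order.TTheory GRing.Theory Num.Theory.
Local Open Scope ring_scope.

Section Sem.
Variables (R : realType) (x : seq unit).
Local Notation N := (size x).
Definition conf := (stt * int * 'I_N.+2)%type.
Definition ind (c : conf) : stt -> int -> 'I_N.+2 -> R[i] :=
  fun q a b => ((q == c.1.1) && (a == c.1.2) && (b == c.2))%:R.
Definition step (c : conf) : conf :=
  let: (q, a, b) := c in let q' := ftr q (wx b) (sgn a) in
  (q', a + cval (entc q'), inord (newpos b (entd q'))).

Lemma newpos_lt (b : 'I_N.+2) d : (newpos b d < N.+2)%N.
Proof. by case: d; rewrite /newpos ?ltn_pmod ?ltn_ord. Qed.

Lemma eq_inord (b : 'I_N.+2) k : (k < N.+2)%N -> (b == inord k) = (k == val b).
Proof. by move=> hk; rewrite -val_eqE /= inordK // eq_sym. Qed.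

Lemma Ux_ind c : @Ux unit R (MM R) x (ind c) = ind (step c).
Proof.
case: c => [[q0 a0] b0]; apply/funext => q'; apply/funext => a'; apply/funext => b'.
rewrite /Ux /ind /=.
rewrite (bigD1 q0) //= [X in _ + X]big1 ?addr0; last first.
  move=> q; rewrite ?andTb => /ssrbool.negbTE hq; rewrite big1 // => c _; rewrite big1 // => d _; rewrite big1 // => b _.
  by rewrite hq /= mul0r.
rewrite eqxx /=.
rewrite (@colc R _ (entc q')); last first.
  move=> c hc /=; rewrite big1 // => d _; rewrite big1 // => b _.
  by rewrite /dlt (ssrbool.negbTE hc) andbF mulr0.
rewrite (@colh R _ (entd q')); last first.
  move=> d hc /=; rewrite big1 // => b _; by rewrite /dlt (ssrbool.negbTE hc) andbF mulr0.
rewrite big_mkcond (bigD1 b0) //= [X in _ + X]big1 ?addr0; last first.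
  by move=> b; rewrite ?andTb => /ssrbool.negbTE hb; rewrite hb andbF mul0r if_same.
rewrite /dlt cmeqxx hmeqxx !andbT eqxx andbT.
case: (eqVneq (a' - cval (entc q')) a0) => [ha|ha]; last first.
  rewrite mul0r if_same.
  case: (eqVneq q' (ftr q0 (wx b0) (sgn a0))) => [<-|hq] /=; last by [].
  by rewrite -subr_eq (ssrbool.negbTE ha).
rewrite ha mul1r.
case: (eqVneq q' (ftr q0 (wx b0) (sgn a0))) => [<-|hq] /=; last first.
  by rewrite ?mulr0 ?if_same.
by rewrite -ha subrK eqxx /= eq_inord ?newpos_lt //; case: ifP.
Qed.

Definition zst : stt -> int -> 'I_N.+2 -> R[i] := fun _ _ _ => 0.
Definition indo (o : option conf) := match o with Some c => ind c | None => zst end.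
Lemma Ux_0 : @Ux unit R (MM R) x zst = zst.
Proof.
apply/funext => q'; apply/funext => a'; apply/funext => b'.
rewrite /Ux /zst big1 // => q _; rewrite big1 // => c _; rewrite big1 // => d _.
by rewrite big1 // => b _; rewrite mul0r.
Qed.

Definition haltq (q : stt) : bool := (q == qA) || (q == qR).
Fixpoint exec k c : option conf :=
  match k with
  | 0 => Some c
  | k.+1 => match exec k c with
            | Some d => if haltq (step d).1.1 then None else Some (step d)
            | None => None end
  end.
Definition c0 : conf := (qS, 0, ord0).

Lemma run_exec t : @run unit R (MM R) x t = indo (exec t c0).
Proof.
elim: t => [|t IH].
  apply/funext => q; apply/funext => a; apply/funext => b.
  by rewrite /= /psi0 /ind /=.
apply/funext => q; apply/funext => a; apply/funext => b.
rewrite /= !inE IH.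
case: (exec t c0) => [d|] /=; last by rewrite Ux_0 /zst if_same.
rewrite Ux_ind; case H: (haltq (step d).1.1) => /=.
  case: ifP => // hq; rewrite /ind /zst.
  case: (eqVneq q (step d).1.1) => [e|] //=.
  by move: H; rewrite /haltq -e hq.
case: ifP => // hq; rewrite /ind.
case: (eqVneq q (step d).1.1) => [e|] //=.
by move: H; rewrite /haltq -e hq.
Qed.

Lemma sqnorm_nat (b : bool) : sqnorm (b%:R : R[i]) = b%:R.
Proof. by case: b; rewrite /sqnorm /= ?expr0n /= ?expr1n ?addr0. Qed.

Lemma sum_pick (I : finType) (i0 : I) (F : I -> R) :
  (forall i, i != i0 -> F i = 0) -> \sum_(i : I) F i = F i0.
Proof. by move=> H; rewrite (bigD1 i0) //= big1 ?addr0 // => i /H. Qed.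

Lemma proj_zst (S : {set stt}) : @proj_prob unit R (MM R) x S zst = 0%E.
Proof.
rewrite /proj_prob esum1 // => a _; rewrite big1 // => q _; rewrite big1 // => b _.
by rewrite /zst (sqnorm_nat false).
Qed.

Lemma proj_ind (S : {set stt}) c :
  @proj_prob unit R (MM R) x S (ind c) = (((c.1.1 \in S)%:R : R)%:E).
Proof.
rewrite /proj_prob.
transitivity (\esum_(a in [set c.1.2]) (((c.1.1 \in S)%:R : R)%:E)).
  rewrite [RHS]esum_mkcond; apply: eq_esum => a _.
  rewrite big_mkcond (sum_pick _ c.1.1); last first.
    move=> q hq; rewrite big1 ?if_same // => b _.
    by rewrite /ind sqnorm_nat (ssrbool.negbTE hq).
  rewrite (sum_pick _ c.2); last first.
    by move=> b hb; rewrite /ind sqnorm_nat (ssrbool.negbTE hb) !andbF.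
  rewrite /ind sqnorm_nat !eqxx !andbT in_set1 /=.
  by case: (c.1.1 \in S); case: (a == c.1.2).
by rewrite esum_set1 // lee_fin; case: (_ \in S).
Qed.

Lemma exec_prev t c e : exec t.+1 c = Some e ->
  exists d, exec t c = Some d /\ ~~ haltq (step d).1.1 /\ e = step d.
Proof. by rewrite /=; case: (exec t c) => // d; case: ifP => // h [<-]; exists d; rewrite h. Qed.

Lemma exec_le j k c e : (j <= k)%N -> exec k c = Some e -> exists d, exec j c = Some d.
Proof.
move=> /subnK <-; elim: (k - j)%N e => [|m IH] e; first by move=> ->; exists e.
by rewrite addSn => /exec_prev [d [/IH H _]].
Qed.

Lemma exec_after T d c : exec T c = Some d -> haltq (step d).1.1 ->
  forall t, (T < t)%N -> exec t c = None.
Proof.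
move=> Hd Hh t /subnK <-; elim: (t - T.+1)%N => [|m IH].
  by rewrite add0n /= Hd Hh.
by rewrite addSn /= IH.
Qed.

Lemma sum_indT (v : \bar R) T n : (T < n)%N ->
  (\sum_(0 <= i < n) (if i == T then v else 0) = v)%E.
Proof.
elim: n => // n IH; rewrite ltnS leq_eqVlt => /orP[/eqP->|h].
  rewrite big_nat_recr //= eqxx big_nat_cond big1 ?add0e // => i.
  by rewrite andbT => /andP[_ hi]; rewrite (ltn_eqF hi).
by rewrite big_nat_recr //= IH // (gtn_eqF h) adde0.
Qed.

Lemma prob_final (S : {set stt}) T d : (forall q, q \in S -> haltq q) ->
  exec T c0 = Some d -> haltq (step d).1.1 ->
  (\sum_(0 <= t <oo) @proj_prob unit R (MM R) x S (Ux (@run unit R (MM R) x t)))%E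
   = (((step d).1.1 \in S)%:R : R)%:E.
Proof.
move=> HS Hd Hh.
have E : forall t, @proj_prob unit R (MM R) x S (Ux (@run unit R (MM R) x t)) =
   if t == T then (((step d).1.1 \in S)%:R : R)%:E else 0%E.
  move=> t; rewrite run_exec; case: (ltngtP t T) => h.
  - have [e He] := @exec_le t.+1 _ _ _ h Hd.
    have [d' [Hd' [Hn _]]] := @exec_prev _ _ _ He.
    rewrite Hd' /= Ux_ind proj_ind.
    case: (boolP (_ \in S)) => [/HS|] //; by rewrite (ssrbool.negbTE Hn).
  - by rewrite (@exec_after _ _ _ Hd Hh _ h) /= Ux_0 proj_zst.
  - by rewrite h Hd /= Ux_ind proj_ind.
rewrite (eq_eseriesr (g := fun t => if t == T then (((step d).1.1 \in S)%:R : R)%:E else 0%E)); last by move=> i _; exact: E.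
apply: cvg_lim => //; apply: cvg_near_cst.
near=> n.
apply: sum_indT; near: n; by exists T.+1.
Unshelve. all: by end_near.
Qed.
End Sem.

From HB Require Import structures.
From mathcomp Require Import all_boot all_order all_algebra.
From mathcomp Require Import complex.
From mathcomp Require Import all_classical all_reals all_analysis.
From mathcomp Require Import zify.
Import Order.TTheory GRing.Theory Num.Theory.
Local Open Scope ring_scope.

Set Implicit Arguments. Unset Strict Implicit.
Lemma onth_unit (s : seq unit) i : onth s i = if (i < size s)%N then Some tt else None.
Proof. by elim: s i => [|[] s IH] [|i] //=. Qed.

Arguments newpos : simpl never.
Arguments wx : simpl never.
Section Traj.
Variables (R : realType) (x : seq unit).
Local Notation N := (size x).
Local Notation stp := (@step x).
Local Notation ex := (@exec x).
Definition cf (q : stt) (m : nat) (p : nat) : conf x := (q, Posz m, inord p).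

Lemma wx_p p : (p < N.+2)%N -> wx (inord p : 'I_N.+2) =
  if p == 0%N then Cent else if (p <= N)%N then Sym tt else Dollar.
Proof.
move=> hp; rewrite /wx /= inordK //; case: p hp => //= p hp.
by rewrite onth_unit; case: ifP.
Qed.

Lemma np_R p : (p <= N)%N -> newpos (inord p : 'I_N.+2) HR = p.+1.
Proof. by move=> hp; rewrite /newpos /= inordK ?modn_small //; lia. Qed.
Lemma np_L p : (0 < p <= N.+1)%N -> newpos (inord p : 'I_N.+2) HL = p.-1.
Proof.
case: p => // p hp; rewrite /newpos /= inordK; last by lia.
have -> : (p.+1 + N.+1 = p + N.+2)%N by lia.
by rewrite modnDr modn_small //; lia.
Qed.
Lemma np_N p : (p < N.+2)%N -> newpos (inord p : 'I_N.+2) HN = p.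
Proof. by move=> hp; rewrite /newpos /= inordK. Qed.

Lemma sgnP m : sgn (Posz m) = (m != 0%N). Proof. by case: m. Qed.
Lemma PS m : Posz m + 1 = Posz m.+1. Proof. by rewrite -addn1 PoszD. Qed.
Lemma PP m : Posz m.+1 - 1 = Posz m. Proof. by rewrite -addn1 PoszD addrK. Qed.

Lemma wx_c : wx (inord 0 : 'I_N.+2) = Cent.
Proof. by rewrite wx_p. Qed.
Lemma wx_b p : (0 < p <= N)%N -> wx (inord p : 'I_N.+2) = Sym tt.
Proof. move=> hp; rewrite wx_p; last by lia. by case: p hp => //= p ->. Qed.
Lemma wx_d : wx (inord N.+1 : 'I_N.+2) = Dollar.
Proof. by rewrite wx_p // ltnn. Qed.

Lemma s_T0 : stp (cf qS 0 0) = cf qT 1 1.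
Proof. by rewrite /step /cf /= wx_c /= np_R. Qed.
Lemma s_T m p : (0 < p <= N)%N -> stp (cf qT m.+1 p) = cf qT m.+2 p.+1.
Proof. by move=> hp; rewrite /step /cf /= wx_b //= PS np_R //; case/andP: hp. Qed.
Lemma s_TG m : stp (cf qT m.+1 N.+1) = cf qG m.+2 N.+1.
Proof. by rewrite /step /cf /= wx_d /= PS np_N. Qed.
Lemma s_GH1 m : stp (cf qG m.+1 N.+1) = cf qH1 m N.+1.
Proof. by rewrite /step /cf /= wx_d /= PP np_N. Qed.
Lemma s_H0H1 m p : (0 < p <= N)%N -> stp (cf qH0 m.+1 p) = cf qH1 m p.
Proof. by move=> hp; rewrite /step /cf /= wx_b //= PP np_N //; lia. Qed.
Lemma s_H1H0 m p : (0 < p <= N.+1)%N -> stp (cf qH1 m.+1 p) = cf qH0 m p.-1.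
Proof.
move=> hp; rewrite /step /cf /=.
have -> : ftr qH1 (wx (inord p : 'I_N.+2)) (sgn (Posz m.+1)) = qH0.
  by rewrite wx_p; [case: (p == 0%N) => //; case: (p <= N)%N | lia].
by rewrite /= PP np_L.
Qed.
Lemma s_H0T p : (0 < p <= N)%N -> stp (cf qH0 0 p) = cf qT 1 p.+1.
Proof. by move=> hp; rewrite /step /cf /= wx_b //= np_R //; case/andP: hp. Qed.
Lemma s_H0R : (stp (cf qH0 0 0)).1.1 = qR.
Proof. by rewrite /step /cf /= wx_c. Qed.
Lemma s_H1V p : (0 < p <= N)%N -> stp (cf qH1 0 p) = cf qV 0 p.+1.
Proof. by move=> hp; rewrite /step /cf /= wx_b //= np_R //; case/andP: hp. Qed.
Lemma s_VA : (stp (cf qV 0 N.+1)).1.1 = qA.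
Proof. by rewrite /step /cf /= wx_d. Qed.
Lemma s_VR p : (0 < p <= N)%N -> (stp (cf qV 0 p)).1.1 = qR.
Proof. by move=> hp; rewrite /step /cf /= wx_b. Qed.

Lemma ex_snoc k c d : ex k c = Some d -> ~~ haltq (stp d).1.1 -> ex k.+1 c = Some (stp d).
Proof. by move=> /= -> /ssrbool.negbTE ->. Qed.

Lemma ex_cat k1 k2 c d e : ex k1 c = Some d -> ex k2 d = Some e -> ex (k1 + k2) c = Some e.
Proof.
move=> H1; elim: k2 e => [|k2 IH] e; first by rewrite addn0 => -[<-].
move=> /exec_prev [d' [H2 [Hn ->]]].
by rewrite addnS; apply: ex_snoc => //; apply: IH.
Qed.

Lemma L_T k m p : (0 < p)%N -> (p + k <= N.+1)%N ->
  ex k (cf qT m.+1 p) = Some (cf qT (m.+1 + k) (p + k)).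
Proof.
move=> hp; elim: k => [|k IH] hk; first by rewrite !addn0.
rewrite (ex_snoc (IH _)); last 2 first.
- by lia.
- by rewrite addSn s_T //; lia.
by rewrite addSn s_T ?addnS //; lia.
Qed.

Lemma L_pair j m : (2 * j <= m)%N -> (j <= N.+1)%N ->
  ex (2 * j) (cf qG m N.+1) = Some (cf (if j == 0%N then qG else qH0) (m - 2 * j) (N.+1 - j)).
Proof.
elim: j => [|j IH] hm hj; first by rewrite muln0 subn0 subn0.
have E1 : (m - 2 * j = (m - 2 * j.+1).+2)%N by lia.
have Hs1 : stp (cf (if j == 0%N then qG else qH0) (m - 2 * j) (N.+1 - j)) =
           cf qH1 (m - 2 * j.+1).+1 (N.+1 - j).
  rewrite E1; case: (eqVneq j 0%N) => [->|hj0].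
    by rewrite subn0 s_GH1.
  by rewrite s_H0H1 //; lia.
have Hs2 : stp (cf qH1 (m - 2 * j.+1).+1 (N.+1 - j)) = cf qH0 (m - 2 * j.+1) (N.+1 - j.+1).
  by rewrite s_H1H0 ?subnS //; lia.
rewrite [X in Some X](_ : _ = stp (stp (cf (if j == 0%N then qG else qH0) (m - 2 * j) (N.+1 - j)))); last by rewrite Hs1 Hs2.
rewrite (_ : (2 * j.+1 = (2 * j).+2)%N); last by lia.
apply: ex_snoc; [apply: ex_snoc; [apply: IH; lia | by rewrite Hs1] | by rewrite Hs1 Hs2].
Qed.

Lemma ex_step k c d e : ex k c = Some d -> stp d = e -> ~~ haltq e.1.1 -> ex k.+1 c = Some e.
Proof. by move=> H <-; apply: ex_snoc. Qed.

Definition pow2 n := exists e, n = (2 ^ e)%N.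

Lemma round n : (n <= N)%N -> (0 < n)%N || (N == 0%N) ->
  exists k d, ex k (cf qG n.+2 N.+1) = Some d /\
   (((stp d).1.1 = qA /\ pow2 n) \/ ((stp d).1.1 = qR /\ ~ pow2 n)).
Proof.
elim/ltn_ind: n => n IH hn hpos.
have [h [hodd|heven]] : exists h, n = (2 * h).+1 \/ n = (2 * h)%N.
  exists n./2; have := odd_double_half n; rewrite -muln2.
  by case: (odd n) => /=; lia.
- have e1 : ex (2 * h.+1) (cf qG n.+2 N.+1) = Some (cf qH0 1 (N - h)).
    by rewrite L_pair /=; [congr (Some (cf _ _ _)); lia | lia | lia].
  have e2 := ex_step e1 (s_H0H1 0 (ltac:(lia) : (0 < N - h <= N)%N)) isT.
  have e3 := ex_step e2 (s_H1V (ltac:(lia) : (0 < N - h <= N)%N)) isT.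
  exists (2 * h.+1).+2, (cf qV 0 (N - h).+1); split => //.
  case: (eqVneq h 0%N) => [h0|hh].
    left; split; last by exists 0%N; lia.
    by rewrite (_ : (N - h).+1 = N.+1); [apply: s_VA | lia].
  right; split; first by apply: s_VR; lia.
  by move=> [[|e] he]; [lia | rewrite expnS in he; lia].
- case: (eqVneq h 0%N) => [h0|hh].
    have N0 : N = 0%N by lia.
    have e1 : ex (2 * h.+1) (cf qG n.+2 N.+1) = Some (cf qH0 0 0).
      by rewrite L_pair /=; [congr (Some (cf _ _ _)); lia | lia | lia].
    exists (2 * h.+1), (cf qH0 0 0); split => //; right; split; first exact: s_H0R.
    by move=> [e he]; have := expn_gt0 2 e; lia.
  have e1 : ex (2 * h.+1) (cf qG n.+2 N.+1) = Some (cf qH0 0 (N - h)).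
    by rewrite L_pair /=; [congr (Some (cf _ _ _)); lia | lia | lia].
  have e2 := ex_step e1 (s_H0T (ltac:(lia) : (0 < N - h <= N)%N)) isT.
  have e3 := @L_T h 0%N (N - h).+1 (ltac:(lia) : (0 < (N - h).+1)%N) (ltac:(lia) : ((N - h).+1 + h <= N.+1)%N).
  have e4 := ex_cat e2 e3.
  rewrite (_ : ((N - h).+1 + h = N.+1)%N) ?add1n in e4; last by lia.
  have e5 := ex_step e4 (s_TG h) isT.
  have [k [d [Hk Hd]]] := IH h (ltac:(lia)) (ltac:(lia)) (ltac:(lia)).
  have e6 := ex_cat e5 Hk.
  exists (((2 * h.+1).+1 + h).+1 + k)%N, d; split; first by [].
  have Heq : pow2 n <-> pow2 h.
    split; move=> [e he].
      by case: e he => [|e] he; [lia | exists e; rewrite expnS in he; lia].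
    by exists e.+1; rewrite expnS; lia.
  by case: Hd => [[-> /Heq]|[-> hp]]; [left | right; split => // /Heq].
Qed.
End Traj.

Unset Implicit Arguments.
From HB Require Import structures.
From mathcomp Require Import all_boot all_order all_algebra.
From mathcomp Require Import complex.
From mathcomp Require Import all_classical all_reals all_analysis.
From mathcomp Require Import zify.
Import Order.TTheory GRing.Theory Num.Theory.
Local Open Scope ring_scope.

Lemma start (x : seq unit) : exec x (size x).+2 (c0 x) = Some (cf x qG (size x).+2 (size x).+1).
Proof.
have -> : c0 x = cf x qS 0 0.
  by rewrite /c0 /cf; congr (_, _); apply/val_inj; rewrite /= inordK.
have e1 := @ex_step x 0 _ _ _ erefl (s_T0 x) isT.
have e2 := @L_T x (size x) 0%N 1%N isT (ltac:(lia)).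
have e3 := ex_cat e1 e2.
rewrite add1n in e3.
have e4 := ex_step e3 (s_TG x (size x)) isT.
exact: e4.
Qed.

Theorem lemma16 (R : realType) :
  exists M : Q1CA unit R,
    well_formed M /\ is_2R1CA M /\
    forall x : seq unit,
      ((exists k : nat, size x = (2 ^ k)%N) -> acc_prob M x = 1%E) /\
      (~ (exists k : nat, size x = (2 ^ k)%N) -> rej_prob M x = 1%E).
Proof.
exists (MM R); split; first exact: wf_MM.
split; first exact: r_MM.
move=> x.
have hpos : (0 < size x)%N || (size x == 0%N) by case: (size x).
have [k [d [Hk Hd]]] := round (leqnn (size x)) hpos.
have Hall := ex_cat (start x) Hk.
have Hh : haltq (step x d).1.1 by case: Hd => [[-> _]|[-> _]].
split => hp.
- rewrite /acc_prob /acc_step /=.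
  rewrite (@prob_final R x [set qA] _ d _ Hall Hh); last by move=> q; rewrite inE => /eqP->.
  by case: Hd => [[-> _]|[_ hn]] //; rewrite inE eqxx.
- rewrite /rej_prob /rej_step /=.
  rewrite (@prob_final R x [set qR] _ d _ Hall Hh); last by move=> q; rewrite inE => /eqP->.
  by case: Hd => [[_ hn]|[-> _]] //; rewrite inE eqxx.
Qed.
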